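(* Let $n\ge 1$. Suppose $\eta_{t+1}\le\eta_t$ for all $t=1,\ldots,n-1$, suppose the base algorithm $\mathcal{A}$ satisfies the regret bound $(\ast)$, and suppose the transition path $T_n\in\mathcal{T}_n$ is covered by a transition path $\widehat{T}_n=(\hat t_1,\ldots,\hat t_{C(\widehat{T}_n)};n)\in\mathcal{T}_n$ with $w_n(\widehat{T}_n)>0$ (with $\hat t_0=1$, $\hat t_{C(\widehat T_n)+1}=n+1$). (a) If $\ell$ is convex in its first argument and takes values in $[0,1]$, then for every meta expert $(T_n,a)$ the forecaster of Algorithm 1 satisfies \[ \widehat L_n - L_n(T_n,a)\le \sum_{c=0}^{C(\widehat T_n)}\rho_{\mathcal E}(\hat t_{c+1}-\hat t_c)+\sum_{t=1}^n\frac{\eta_t}{8}+\frac{1}{\eta_n}\ln\frac{1}{w_n(\widehat T_n)} \le (C(\widehat T_n)+1)\,\rho_{\mathcal E}\!\left(\frac{n}{C(\widehat T_n)+1}\right)+\sum_{t=1}^n\frac{\eta_t}{8}+\frac{1}{\eta_n}\ln\frac{1}{w_n(\widehat T_n)}. \] (b) If $\ell$ is exp-concave for the value $\eta>0$ and Algorithm 1 is used with $\eta_t=\eta$ for all $t$, then for every meta expert $(T_n,a)$ \[ \widehat L_n - L_n(T_n,a)\le \sum_{c=0}^{C(\widehat T_n)}\rho_{\mathcal E}(\hat t_{c+1}-\hat t_c)+\frac{1}{\eta}\ln\frac{1}{w_n(\widehat T_n)} \le (C(\widehat T_n)+1)\,\rho_{\mathcal E}\!\left(\frac{n}{C(\widehat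 T_n)+1}\right)+\frac{1}{\eta}\ln\frac{1}{w_n(\widehat T_n)}. \]
   Context: Online prediction setting: $\mathcal D$ is a convex subset of a vector space, $\mathcal Y$ a set, and $\ell:\mathcal D\times\mathcal Y\to\mathbb R$ a loss function convex in its first argument. $\mathcal E$ is a set of base experts. In each round $t=1,2,\ldots$ the environment chooses an outcome $y_t\in\mathcal Y$ and advice $f_{i,t}\in\mathcal D$ for each $i\in\mathcal E$; the advice is revealed, the forecaster outputs $\widehat p_t\in\mathcal D$, then $y_t$ is revealed. $\widehat L_n=\sum_{t=1}^n\ell(\widehat p_t,y_t)$, and for $1\le t_1\le t_2$, $L_i(t_1,t_2)=\sum_{t=t_1}^{t_2-1}\ell(f_{i,t},y_t)$. The loss is exp-concave for $\eta>0$ if $p\mapsto e^{-\eta\ell(p,y)}$ is concave for every fixed $y$. Base algorithm: $\mathcal A$ is a forecasting algorithm in this protocol satisfying the regret bound $(\ast)$: for every $n$ and every sequence of outcomes and advice, the cumulative loss of $\mathcal A$ over $n$ rounds minus $\min_{i\in\mathcal E}$ of the cumulative loss of expert $i$ is at most $\rho_{\mathcal E}(n)$, where $\rho_{\mathcal E}:[0,\infty)\to[0,\infty)$ is nondecreasing, concave and $\rho_{\mathcal E}(0)=0$. For $t_1<t_2$, $L_{\mathcal A}(t_1,t_2)$ denotes the loss of a fresh instance of $\mathcal A$ started at time $t_1$ and run on rounds $t_1,\ldots,t_2-1$. Transition paths: $\mathcal T_t$ is the set of vectors $T=(t_1,\ldots,t_C;t)$ with $C\ge 0$ and $1<t_1<\cdots<t_C\le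 t$; $C(T)=C$ is the number of switches, and $t_0:=1$, $t_{C+1}:=t+1$. A meta expert $(T,a)$ with $T\in\mathcal T_n$ and $a=(i_0,\ldots,i_C)\in\mathcal E^{C+1}$ follows expert $i_c$ on $[t_c,t_{c+1})$; its loss is $L_n(T,a)=\sum_{c=0}^C L_{i_c}(t_c,t_{c+1})$. For $t\le n$ the truncation of $T\in\mathcal T_n$ is $T_t=(t_1,\ldots,t_k;t)$ where $t_k\le t<t_{k+1}$, and $\tau_t(T)=t_k$. $\widehat T$ covers $T$ if every switch point of $T$ is a switch point of $\widehat T$. The algorithm $(\mathcal A,T)$ runs $\mathcal A$ restarting it at each $t_c$; its prediction at time $t$ is $f_{\mathcal A,t}(\tau_t(T))$, the output at time $t$ of an instance of $\mathcal A$ started at time $\tau_t(T)$; $L_t(\mathcal A,T)$ denotes its cumulative loss through time $t$, with $L_0(\mathcal A,T_0)=0$ for the empty path $T_0$. Weight functions: $w_t:\mathcal T_t\to[0,1]$ is a probability distribution on $\mathcal T_t$ for each $t$, and the family is consistent: $w_t(T_t)=\sum_{T'\in\mathcal T_{t+1}:T'_t=T_t}w_{t+1}(T')$; $w_0(T_0)=1$. Algorithm 1 (inputs $\mathcal A$, $\{w_t\}$, learning parameters $\eta_t>0$): for $t=1,\ldots,n$ predict $\widehat p_t=\dfrac{\sum_{T\in\mathcal T_t}w_t(T)e^{-\eta_tL_{t-1}(\mathcal A,T_{t-1})}f_{\mathcal A,t}(\tau_t(T))}{\sum_{T\in\mathcal T_t}w_t(T)e^{-\eta_tL_{t-1}(\mathcal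 A,T_{t-1})}}$. *)

(* Defs.v *)
From HB Require Import structures.
From mathcomp Require Import all_boot all_order all_algebra.
From mathcomp Require Import all_classical all_reals all_analysis.
From Stdlib Require List.
Set Implicit Arguments. Unset Strict Implicit. Unset Printing Implicit Defensive.
Import Order.TTheory GRing.Theory Num.Theory.
Local Open Scope ring_scope.

Section Defs.
Variables (R : realType) (V : lmodType R) (Y : Type) (E : finType).

Definition convex_dom (D : V -> Prop) : Prop :=
  forall x1 x2 (lam : R), D x1 -> D x2 -> 0 <= lam <= 1 ->
    D (lam *: x1 + (1 - lam) *: x2).

Definition convex_loss (D : V -> Prop) (loss : V -> Y -> R) : Prop :=
  forall (yy : Y) x1 x2 (lam : R), D x1 -> D x2 -> 0 <= lam <= 1 ->
    loss (lam *: x1 + (1 - lam) *: x2) yy <= lam * loss x1 yy + (1 - lam) * loss x2 yy.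

Definition exp_concave (D : V -> Prop) (loss : V -> Y -> R) (eta : R) : Prop :=
  forall (yy : Y) x1 x2 (lam : R), D x1 -> D x2 -> 0 <= lam <= 1 ->
    lam * expR (- eta * loss x1 yy) + (1 - lam) * expR (- eta * loss x2 yy)
      <= expR (- eta * loss (lam *: x1 + (1 - lam) *: x2) yy).

(* A deterministic forecasting algorithm: given the history of past rounds
   (advice vector, outcome) and the current advice, it outputs a prediction. *)
Definition algo := seq ((E -> V) * Y) -> (E -> V) -> V.

Definition algo_in_D (D : V -> Prop) (A : algo) : Prop :=
  forall h g, List.Forall (fun p => forall i, D (p.1 i)) h ->
    (forall i, D (g i)) -> D (A h g).

(* rounds are numbered 1,2,...; f t i is the advice of expert i at round t,
   y t the outcome at round t *)
Definition hist (f : nat -> E -> V) (y : nat -> Y) (s t : nat) :=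
  [seq (f k, y k) | k <- index_iota s t].

Definition expert_loss (loss : V -> Y -> R) f y (i : E) (t1 t2 : nat) : R :=
  \sum_(t1 <= k < t2) loss (f k i) (y k).

(* output at time t of a fresh instance of A started at time s *)
Definition algo_pred (A : algo) f y (s t : nat) : V := A (hist f y s t) (f t).

Definition algo_loss (loss : V -> Y -> R) (A : algo) f y (t1 t2 : nat) : R :=
  \sum_(t1 <= k < t2) loss (algo_pred A f y t1 k) (y k).

Definition regret_bound (D : V -> Prop) (loss : V -> Y -> R) (A : algo)
    (rho : R -> R) : Prop :=
  forall (f : nat -> E -> V) (y : nat -> Y), (forall k i, D (f k i)) ->
    forall (m : nat) (i : E),
      algo_loss loss A f y 1 m.+1 - expert_loss loss f y i 1 m.+1 <= rho m%:R.

Definition rho_ok (rho : R -> R) : Prop :=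
  [/\ forall x, 0 <= x -> 0 <= rho x,
      forall x1 x2, 0 <= x1 -> x1 <= x2 -> rho x1 <= rho x2,
      forall x1 x2 (lam : R), 0 <= x1 -> 0 <= x2 -> 0 <= lam <= 1 ->
        lam * rho x1 + (1 - lam) * rho x2 <= rho (lam * x1 + (1 - lam) * x2)
    & rho 0 = 0].

(* Transition path T = (t_1,...,t_C; t) in T_t, represented by t and the
   sequence s = [:: t_1; ...; t_C] with 1 < t_1 < ... < t_C <= t. *)
Definition is_tpath (t : nat) (s : seq nat) : bool :=
  sorted ltn s && all (fun x => (1 < x <= t)%N) s.

(* enumeration of T_t: bit masks over the candidate switch points 2..t *)
Definition tpath_of (t : nat) (m : (t.-1).-tuple bool) : seq nat :=
  mask m (index_iota 2 t.+1).

Definition trunc (t : nat) (s : seq nat) : seq nat := [seq x <- s | (x <= t)%N].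
Definition tau (t : nat) (s : seq nat) : nat := last 1%N (trunc t s).

Definition weights_ok (w : nat -> seq nat -> R) : Prop :=
  [/\ forall t s, is_tpath t s -> 0 <= w t s <= 1,
      forall t, \sum_(m : (t.-1).-tuple bool) w t (tpath_of m) = 1,
      w 0%N [::] = 1
    & forall t s, is_tpath t s ->
        w t s = \sum_(m : (t.+1.-1).-tuple bool | trunc t (@tpath_of t.+1 m) == s)
                  w t.+1 (@tpath_of t.+1 m)].

(* L_t(A,T): cumulative loss through time t of A restarted at the switch
   points of T *)
Definition AT_loss (loss : V -> Y -> R) (A : algo) f y (s : seq nat) (t : nat) : R :=
  \sum_(1 <= k < t.+1) loss (algo_pred A f y (tau k s) k) (y k).

Definition alg1_weight loss A f y (w : nat -> seq nat -> R) (eta : nat -> R)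
    (t : nat) (s : seq nat) : R :=
  w t s * expR (- eta t * AT_loss loss A f y (trunc t.-1 s) t.-1).

Definition alg1_pred loss A f y w eta (t : nat) : V :=
  (\sum_(m : (t.-1).-tuple bool) alg1_weight loss A f y w eta t (tpath_of m))^-1 *:
  \sum_(m : (t.-1).-tuple bool)
      alg1_weight loss A f y w eta t (tpath_of m) *: algo_pred A f y (tau t (tpath_of m)) t.

Definition alg1_loss loss A f y w eta (n : nat) : R :=
  \sum_(1 <= t < n.+1) loss (alg1_pred loss A f y w eta t) (y t).

Definition tpoint (n : nat) (s : seq nat) (c : nat) : nat := nth 0%N (1%N :: rcons s n.+1) c.

(* L_n(T,a) for the meta expert (T,a), a = (a 0, ..., a C) *)
Definition meta_loss loss f y (n : nat) (s : seq nat) (a : nat -> E) : R :=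
  \sum_(c < (size s).+1)
     expert_loss loss f y (a c) (tpoint n s c) (tpoint n s c.+1).

Definition rho_sum (rho : R -> R) (n : nat) (s : seq nat) : R :=
  \sum_(c < (size s).+1) rho ((tpoint n s c.+1 - tpoint n s c)%N%:R).

End Defs.

(* Main.v *)
Require Import Defs.
From HB Require Import structures.
From mathcomp Require Import all_boot all_order all_algebra.
From mathcomp Require Import all_classical all_reals all_analysis.
From mathcomp.algebra_tactics Require Import ring lra.
From mathcomp Require Import zify.
Import Order.TTheory GRing.Theory Num.Theory.
Local Open Scope ring_scope.

Module Helpers.
Import numFieldNormedType.Exports.
Set Implicit Arguments. Unset Strict Implicit. Unset Printing Implicit Defensive.

Lemma iota_eq t : index_iota 2 t.+1 = iota 2 t.-1.
Proof. rewrite /index_iota; congr iota; lia. Qed.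

Lemma tpath_ok t (m : (t.-1).-tuple bool) : is_tpath t (tpath_of m).
Proof.
rewrite /is_tpath /tpath_of iota_eq; apply/andP; split.
  apply: (subseq_sorted ltn_trans (mask_subseq _ _)); exact: iota_ltn_sorted.
apply/allP => x /mem_mask; rewrite mem_iota => /andP[h1 h2].
apply/andP; split => //; case: t m h2 => [|t] m h2 /=; lia.
Qed.

Lemma tpath_surj t s : is_tpath t s -> exists m : (t.-1).-tuple bool, tpath_of m = s.
Proof.
move=> /andP[ss sa].
have e : s = [seq x <- iota 2 t.-1 | x \in s].
  apply: (irr_sorted_eq ltn_trans ltnn ss).
    by apply: sorted_filter; [exact: ltn_trans | exact: iota_ltn_sorted].
  move=> x; rewrite mem_filter /= mem_iota.
  case xs: (x \in s) => //=.
  move/allP: sa => /(_ x xs) /andP[h1 h2]; apply/esym/andP; split => //.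
  case: t {ss} h2 => [|t] /=; lia.
have /subseqP[m sm em] := filter_subseq (fun x => x \in s) (iota 2 t.-1).
rewrite size_iota in sm.
exists (Tuple (introT eqP sm)); rewrite /tpath_of iota_eq /=.
by rewrite -em -e.
Qed.

Lemma tpath_inj t (m1 m2 : (t.-1).-tuple bool) : tpath_of m1 = tpath_of m2 -> m1 = m2.
Proof.
rewrite /tpath_of iota_eq => e.
apply: eq_from_tnth => i.
have hi : (i < t.-1)%N by [].
have u : uniq (iota 2 t.-1) by exact: iota_uniq.
have := congr1 (fun s => (i + 2)%N \in s) e; rewrite /= !in_mask //.
have -> : index (i + 2)%N (iota 2 t.-1) = i.
  have -> : (i + 2 = nth 0 (iota 2 t.-1) i)%N by rewrite nth_iota // addnC.
  by rewrite index_uniq // size_iota.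
rewrite mem_iota /= (_ : (2 <= i + 2 < 2 + t.-1)%N) /=; last lia.
by rewrite !(tnth_nth false) => ->.
Qed.

Lemma trunc_tpath t s : is_tpath t.+1 s -> is_tpath t (trunc t s).
Proof.
move=> /andP[ss sa]; apply/andP; split; first by apply: sorted_filter => //; exact: ltn_trans.
apply/allP => x; rewrite mem_filter => /andP[xt xs].
by move/allP: sa => /(_ x xs) /andP[-> _].
Qed.

Lemma tpath_surjb t s : is_tpath t s -> exists m : (t.-1).-tuple bool, tpath_of m == s.
Proof. by move=> /tpath_surj[m e]; exists m; rewrite e. Qed.

Section Group.
Variable R : realType.

Lemma sum_group (w : nat -> seq nat -> R) (G : seq nat -> R) t :
  weights_ok w ->
  \sum_(m : (t.+1.-1).-tuple bool) w t.+1 (@tpath_of t.+1 m) * G (trunc t (@tpath_of t.+1 m)) =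
  \sum_(m : (t.-1).-tuple bool) w t (tpath_of m) * G (tpath_of m).
Proof.
move=> [_ _ _ wc].
pose h (m : (t.+1.-1).-tuple bool) : (t.-1).-tuple bool :=
  xchoose (tpath_surjb (trunc_tpath (tpath_ok m))).
have hP m m' : (h m == m') = (trunc t (@tpath_of t.+1 m) == tpath_of m').
  have e := xchooseP (tpath_surjb (trunc_tpath (tpath_ok m))).
  rewrite -/(h m) in e; rewrite -(eqP e).
  apply/eqP/eqP => [-> //|]; exact: tpath_inj.
rewrite (partition_big h xpredT) //=.
apply: eq_bigr => m' _.
rewrite (wc _ _ (tpath_ok m')) mulr_suml.
apply: eq_big => m; first by rewrite hP.
by move=> hm; rewrite hP in hm; rewrite (eqP hm).
Qed.
End Group.

Lemma q_sorted n s : (0 < n)%N -> is_tpath n s -> sorted ltn (1%N :: rcons s n.+1).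
Proof.
move=> n0 /andP[ss sa] /=.
rewrite rcons_path (path_sortedE ltn_trans) ss andbT; apply/andP; split.
  by apply/allP => x xs; move/allP: sa => /(_ x xs) /andP[].
case: (lastP s) sa => [_|s' x sa]; first by rewrite /= ltnS.
rewrite last_rcons.
by move/allP: sa => /(_ x); rewrite mem_rcons mem_head => /(_ isT) /andP[_ ?].
Qed.

Lemma tpoint_s n s i : (i < size s)%N -> tpoint n s i.+1 = nth 0%N s i.
Proof. by move=> hi; rewrite /tpoint /= nth_rcons hi. Qed.

Lemma tpoint0 n s : tpoint n s 0 = 1%N.
Proof. by []. Qed.

Lemma tpoint_last n s : tpoint n s (size s).+1 = n.+1.
Proof. by rewrite /tpoint /= nth_rcons ltnn eqxx. Qed.

Lemma tpoint_lt n s i j : (0 < n)%N -> is_tpath n s -> (i < j)%N -> (j <= (size s).+1)%N ->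
  (tpoint n s i < tpoint n s j)%N.
Proof.
move=> n0 hs ij js; have := q_sorted n0 hs.
move/(sorted_ltn_nth ltn_trans 0%N) => h; apply: h => //;
  rewrite inE /= size_rcons; lia.
Qed.

Lemma tpoint_le n s i j : (0 < n)%N -> is_tpath n s -> (i <= j)%N -> (j <= (size s).+1)%N ->
  (tpoint n s i <= tpoint n s j)%N.
Proof.
move=> n0 hs; rewrite leq_eqVlt => /orP[/eqP -> //|ij] js.
exact/ltnW/tpoint_lt.
Qed.

Section Seg.
Variable R : realType.

Lemma seg_sum n s (F : nat -> R) : (0 < n)%N -> is_tpath n s ->
  \sum_(1 <= k < n.+1) F k =
  \sum_(c < (size s).+1) \sum_(tpoint n s c <= k < tpoint n s c.+1) F k.
Proof.
move=> n0 hs.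
suff H : forall j, (j <= (size s).+1)%N ->
  \sum_(c < j) \sum_(tpoint n s c <= k < tpoint n s c.+1) F k =
  \sum_(1 <= k < tpoint n s j) F k.
  by rewrite H // tpoint_last.
elim=> [_|j IH hj]; first by rewrite big_ord0 big_geq.
rewrite big_ord_recr /= IH; last lia.
rewrite -big_cat_nat //; last exact: tpoint_le.
by rewrite -(tpoint0 n s); apply: tpoint_le => //; lia.
Qed.
End Seg.

Lemma take_le n s c x : (0 < n)%N -> is_tpath n s -> (c <= size s)%N -> x \in take c s ->
  (x <= tpoint n s c)%N.
Proof.
move=> n0 hs hc /(nthP 0%N) [i]; rewrite size_take_min => hi <-.
rewrite nth_take; last lia.
rewrite -(tpoint_s n); last lia.
apply: tpoint_le => //; lia.
Qed.

Lemma drop_ge n s c x : (0 < n)%N -> is_tpath n s -> x \in drop c s ->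
  (tpoint n s c.+1 <= x)%N.
Proof.
move=> n0 hs /(nthP 0%N) [i]; rewrite size_drop => hi <-.
rewrite nth_drop -(tpoint_s n); last by rewrite -ltn_subRL.
apply: tpoint_le => //; first lia.
by rewrite ltnS; apply: ltnW; rewrite -ltn_subRL.
Qed.

Lemma seg_trunc n s c k : (0 < n)%N -> is_tpath n s -> (c <= size s)%N ->
  (tpoint n s c <= k < tpoint n s c.+1)%N -> trunc k s = take c s.
Proof.
move=> n0 hs hc /andP[h1 h2].
rewrite /trunc -{1}(cat_take_drop c s) filter_cat.
rewrite (eq_in_filter (a2 := predT)) ?filter_predT; last first.
  by move=> x /(take_le n0 hs hc) /= xc; apply: leq_trans h1.
rewrite (eq_in_filter (a2 := pred0)) ?filter_pred0 ?cats0 //.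
move=> x /(drop_ge n0 hs) /= xc; apply/negbTE; rewrite -ltnNge.
exact: leq_trans h2 xc.
Qed.

Lemma seg_tau n s c k : (0 < n)%N -> is_tpath n s -> (c <= size s)%N ->
  (tpoint n s c <= k < tpoint n s c.+1)%N -> tau k s = tpoint n s c.
Proof.
move=> n0 hs hc hk; rewrite /tau (seg_trunc n0 hs hc hk).
case: c hc hk => [|c] hc hk; first by rewrite take0.
rewrite tpoint_s // -nth_last size_take_min /= (minn_idPl hc).
by rewrite /= nth_take // (set_nth_default 0%N).
Qed.

Lemma seg_size n s c k : (0 < n)%N -> is_tpath n s -> (c <= size s)%N ->
  (tpoint n s c <= k < tpoint n s c.+1)%N -> size (trunc k s) = c.
Proof. by move=> n0 hs hc hk; rewrite (seg_trunc n0 hs hc hk) size_take_min (minn_idPl hc). Qed.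

Section Regret.
Variables (R : realType) (V : lmodType R) (Y : Type) (E : finType).
Variables (D : V -> Prop) (loss : V -> Y -> R) (A : algo V Y E) (rho : R -> R).

Lemma hist_shift (f : nat -> E -> V) (y : nat -> Y) a k : (1 <= a)%N -> (1 <= k)%N ->
  hist (fun j => f (j + a.-1)%N) (fun j => y (j + a.-1)%N) 1 k = hist f y a (k + a.-1).
Proof.
move=> a1 k1; rewrite /hist /index_iota.
have -> : (k + a.-1 - a = k - 1)%N by lia.
have -> : a = (a.-1 + 1)%N by lia.
rewrite iotaDl -map_comp; apply: eq_map => j /=.
by rewrite addnC (_ : (a.-1 + 1).-1 = a.-1)%N //; lia.
Qed.

Lemma regret_shift (f : nat -> E -> V) (y : nat -> Y) (i : E) a b :
  regret_bound D loss A rho -> (forall k i, D (f k i)) -> (1 <= a)%N -> (a <= b)%N ->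
  algo_loss loss A f y a b - expert_loss loss f y i a b <= rho (b - a)%N%:R.
Proof.
move=> hr hD a1 ab.
have := hr (fun j => f (j + a.-1)%N) (fun j => y (j + a.-1)%N) (fun k i => hD _ i) (b - a)%N i.
have e1 : forall F : nat -> R, \sum_(a <= k < b) F k = \sum_(1 <= k < (b - a).+1) F (k + a.-1)%N.
  move=> F; rewrite -{1}(_ : (1 + a.-1 = a)%N); last lia.
  by rewrite big_addn; congr (\sum_(1 <= k < _) _); lia.
rewrite /algo_loss /expert_loss !e1.
congr (_ - _ <= _).
apply: eq_big_nat => k /andP[k1 _].
by rewrite /algo_pred hist_shift.
Qed.
End Regret.

Lemma trunc_const n s shat c k : (0 < n)%N -> is_tpath n shat -> {subset s <= shat} ->
  (c <= size shat)%N -> (tpoint n shat c <= k < tpoint n shat c.+1)%N ->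
  trunc k s = trunc (tpoint n shat c) s.
Proof.
move=> n0 hsh sub hc hk; rewrite /trunc; apply: eq_in_filter => x xs.
have /andP[h1 h2] := hk.
apply/idP/idP => hx; last exact: leq_trans hx h1.
apply: (take_le n0 hsh hc).
rewrite -(seg_trunc n0 hsh hc hk) mem_filter hx /=.
exact: sub.
Qed.

Section Decomp.
Variables (R : realType) (V : lmodType R) (Y : Type) (E : finType).
Variables (D : V -> Prop) (loss : V -> Y -> R) (A : algo V Y E) (rho : R -> R).

Lemma AT_decomp (f : nat -> E -> V) (y : nat -> Y) n s shat (a : nat -> E) :
  (0 < n)%N -> is_tpath n s -> is_tpath n shat -> {subset s <= shat} ->
  regret_bound D loss A rho -> (forall k i, D (f k i)) ->
  AT_loss loss A f y shat n <= meta_loss loss f y n s a + rho_sum rho n shat.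
Proof.
move=> n0 hs hsh sub hr hD.
have eA : AT_loss loss A f y shat n =
    \sum_(c < (size shat).+1) algo_loss loss A f y (tpoint n shat c) (tpoint n shat c.+1).
  rewrite /AT_loss (seg_sum _ n0 hsh); apply: eq_bigr => c _.
  apply: eq_big_nat => k hk; rewrite (seg_tau n0 hsh _ hk) //.
  by rewrite -ltnS.
have eM : meta_loss loss f y n s a =
    \sum_(c < (size shat).+1) expert_loss loss f y (a (size (trunc (tpoint n shat c) s)))
        (tpoint n shat c) (tpoint n shat c.+1).
  transitivity (\sum_(1 <= k < n.+1) loss (f k (a (size (trunc k s)))) (y k)).
    rewrite /meta_loss (seg_sum _ n0 hs); apply: eq_bigr => c _.
    apply: eq_big_nat => k hk; rewrite (seg_size n0 hs _ hk) //.
    by rewrite -ltnS.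
  rewrite (seg_sum _ n0 hsh); apply: eq_bigr => c _.
  apply: eq_big_nat => k hk; rewrite (trunc_const n0 hsh sub _ hk) //.
  by rewrite -ltnS.
rewrite eA eM /rho_sum -lerBlDl -sumrB.
apply: ler_sum => c _.
apply: (regret_shift _ _ hr hD).
  have hc : (c <= (size shat).+1)%N by have := ltn_ord c; lia.
  exact: leq_trans (tpoint_le n0 hsh (leq0n c) hc).
apply: tpoint_le => //.
Qed.
End Decomp.
Section Jensen.
Variables (R : realType) (V : lmodType R) (D : V -> Prop) (phi : V -> R).
Hypothesis HD : convex_dom D.
Hypothesis Hphi : forall x1 x2 (lam : R), D x1 -> D x2 -> 0 <= lam <= 1 ->
  lam * phi x1 + (1 - lam) * phi x2 <= phi (lam *: x1 + (1 - lam) *: x2).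

Lemma sum0_nneg (I : eqType) (r : seq I) (F : I -> R) :
  (forall i, 0 <= F i) -> \sum_(i <- r) F i = 0 -> forall i, i \in r -> F i = 0.
Proof.
move=> F0; elim: r => [//|j r IH]; rewrite big_cons => e i.
have h1 := F0 j; have h2 : 0 <= \sum_(k <- r) F k by apply: sumr_ge0.
have ej : F j = 0 by lra.
rewrite inE => /orP[/eqP -> //|ir]; apply: IH => //; lra.
Qed.

Lemma jensen (I : eqType) (r : seq I) (lam : I -> R) (x : I -> V) :
  (forall i, 0 <= lam i) -> (forall i, D (x i)) -> \sum_(i <- r) lam i = 1 ->
  D (\sum_(i <- r) lam i *: x i) /\
  \sum_(i <- r) lam i * phi (x i) <= phi (\sum_(i <- r) lam i *: x i).
Proof.
move=> + xD; elim: r lam => [|j r IH] lam l0; first by rewrite big_nil => /esym/eqP; rewrite oner_eq0.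
rewrite !big_cons => hs.
have hr0 : 0 <= \sum_(i <- r) lam i by apply: sumr_ge0.
have hj := l0 j.
case: (eqVneq (lam j) 1) => [ej|nj].
  have z : forall i, i \in r -> lam i = 0 by apply: sum0_nneg => //; lra.
  rewrite !big_seq !big1 ?ej ?scale1r ?mul1r ?addr0; first (split => //; exact: lexx).
    by move=> i ir; rewrite z // mul0r.
  by move=> i ir; rewrite z // scale0r.
have b0 : 0 < 1 - lam j by rewrite lt_def subr_eq0 eq_sym nj /=; lra.
pose lam' i := lam i / (1 - lam j).
have l0' : forall i, 0 <= lam' i by move=> i; apply: divr_ge0 => //; exact: ltW.
have s1 : \sum_(i <- r) lam' i = 1.
  by rewrite /lam' -mulr_suml (_ : \sum_(i <- r) lam i = 1 - lam j) ?divff ?gt_eqF //; lra.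
have [IHD IHp] := IH lam' l0' s1.
set yy := \sum_(i <- r) lam' i *: x i in IHD IHp.
have ey : \sum_(i <- r) lam i *: x i = (1 - lam j) *: yy.
  rewrite /yy scaler_sumr; apply: eq_bigr => i _.
  by rewrite scalerA /lam' mulrC divfK ?gt_eqF.
have ep : \sum_(i <- r) lam i * phi (x i) = (1 - lam j) * \sum_(i <- r) lam' i * phi (x i).
  rewrite mulr_sumr; apply: eq_bigr => i _.
  by rewrite mulrA /lam' [_ * (_ / _)]mulrC divfK ?gt_eqF.
have lj : 0 <= lam j <= 1 by apply/andP; split => //; lra.
rewrite ey ep; split; first exact: HD.
apply: le_trans (Hphi (xD j) IHD lj).
by apply: lerD => //; apply: ler_wpM2l => //; exact: ltW.
Qed.
End Jensen.

Section RhoJ.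
Variable R : realType.

Lemma rho_jensen (rho : R -> R) n shat : rho_ok rho -> (0 < n)%N -> is_tpath n shat ->
  rho_sum rho n shat <= (size shat).+1%:R * rho (n%:R / (size shat).+1%:R).
Proof.
move=> [r0 rmono rconc _] n0 hsh.
set N := (size shat).+1.
have N0 : 0 < N%:R :> R by rewrite ltr0n.
pose D := fun x : R^o => 0 <= x.
have HD : convex_dom D.
  move=> x1 x2 l h1 h2 /andP[l0 l1]; rewrite /D.
  apply: addr_ge0; apply: mulr_ge0 => //; lra.
have Hphi : forall (x1 x2 : R^o) (l : R), D x1 -> D x2 -> 0 <= l <= 1 ->
  l * rho x1 + (1 - l) * rho x2 <= rho (l *: x1 + (1 - l) *: x2).
  by move=> x1 x2 l h1 h2 hl; apply: rconc.
have hlen : \sum_(c < N) ((tpoint n shat c.+1 - tpoint n shat c)%N%:R : R) = n%:R.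
  have := seg_sum (fun _ => 1 : R) n0 hsh.
  rewrite sumr_const_nat subn1 /= => ->.
  by apply: eq_bigr => c _; rewrite sumr_const_nat.
have hinv : 0 <= (N%:R : R)^-1 by rewrite invr_ge0; exact: ltW.
have hsum : \sum_(c <- index_enum 'I_N) (N%:R : R)^-1 = 1.
  rewrite (_ : \sum_(c <- index_enum 'I_N) (N%:R : R)^-1 = \sum_(c < N) (N%:R : R)^-1) // sumr_const card_ord -[_ *+ N]mulr_natl mulfV // gt_eqF //.
have [_ hj] := @jensen R R^o D rho HD Hphi _ (index_enum 'I_N) (fun _ => (N%:R : R)^-1)
  (fun c : 'I_N => ((tpoint n shat c.+1 - tpoint n shat c)%N%:R : R^o))
  (fun _ => hinv) (fun c => ler0n _ _) hsum.
move: hj; rewrite -mulr_sumr -scaler_sumr hlen => hj.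
rewrite /rho_sum -/N.
have e : (N%:R^-1 *: (n%:R : R^o) : R) = n%:R / N%:R by rewrite /GRing.scale /= mulrC.
rewrite e in hj.
have hN : 0 < (N%:R : R)^-1 by rewrite invr_gt0.
by rewrite -(ler_pM2l hN) mulrA mulVf ?gt_eqF // mul1r.
Qed.
End RhoJ.
Section Calc.
Variable R : realType.

Lemma le_deriv (f df : R -> R) (x : R) : 0 <= x ->
  (forall z : R, is_derive z (1:R) f (df z)) -> (forall z : R, 0 < z -> z < x -> 0 <= df z) ->
  f 0 <= f x.
Proof.
move=> x0 hd hpos; case: (eqVneq x 0) => [->//|xn0].
have x0' : 0 < x by rewrite lt_def xn0.
have [c /andP[c0 cx] ] : exists2 c, c \in `]0, x[%R & f x - f 0 = df c * (x - 0).
  apply: MVT => //.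
  apply: continuous_subspaceT => r.
  by apply/differentiable_continuous/derivable1_diffP; case: (hd r).
move=> eq; rewrite -subr_ge0 eq subr0 mulr_ge0 //; exact: hpos.
Qed.

Lemma tanh_le (x : R) : 0 <= x -> 2 * (expR x - 1) <= x * (expR x + 1).
Proof.
move=> x0.
pose H := fun z : R => z * (expR z + 1) - 2 * (expR z - 1).
suff : H 0 <= H x by rewrite /H expR0 !mul0r subrr mulr0 subr0 subr_ge0.
apply: (@le_deriv H (fun z => 1 - expR z + z * expR z)) => //.
  move=> z; rewrite /H.
  have -> : (fun z : R => z * (expR z + 1) - 2 * (expR z - 1)) =
     (id * (expR + cst 1) - cst 2 * (expR - cst 1) : R -> R) by [].
  apply: is_derive_eq.
  rewrite /= !(addr0, subr0, scaler0) /GRing.scale /= mulr1.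
  have -> : (expR + cst 1) z = expR z + 1 by [].
  ring.
move=> z z0 zx.
have := expR_ge1Dx (- z); rewrite expRN => h.
have ez : 0 < expR z by exact: expR_gt0.
have : (1 - z) * expR z <= 1.
  have : (1 - z) * expR z <= (expR z)^-1 * expR z by rewrite ler_pM2r // addrC.
  by rewrite mulVf ?gt_eqF.
lra.
Qed.

Lemma hoeff_key (p x : R) : 0 <= p <= 1 -> 0 <= x ->
  p * (1 - p) * (1 - expR (- x)) <= x / 4 * (1 - p + p * expR (- x)).
Proof.
move=> /andP[p0 p1] x0.
set z := expR (- (x / 2)).
have z0 : 0 < z by exact: expR_gt0.
have ez : expR (- x) = z ^+ 2.
  rewrite /z -expRM_natl; congr expR; rewrite mulrN mulrC divfK //.
have z1 : z <= 1.
  by rewrite /z -[X in _ <= X]expR0 ler_expR; lra.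
have h2 : 4 * (1 - z) <= x * (1 + z).
  have h := @tanh_le (x / 2) ltac:(lra).
  have e1 : expR (x / 2) * z = 1 by rewrite /z -expRD subrr expR0.
  have := ler_wpM2r (ltW z0) h.
  have -> : 2 * (expR (x / 2) - 1) * z = 2 * (1 - z) by rewrite -mulrA mulrBl e1 mul1r.
  have -> : x / 2 * (expR (x / 2) + 1) * z = x / 2 * (1 + z).
    by rewrite -mulrA mulrDl e1 mul1r.
  lra.
rewrite ez.
have q0 : 0 <= 1 - p + p * z ^+ 2 by nra.
have h1 : (1 + z) ^+ 2 * (p * (1 - p)) <= 1 - p + p * z ^+ 2.
  have : 0 <= (1 - (1 + z) * p) ^+ 2 by exact: sqr_ge0.
  nra.
have h3 : 4 * (1 - z) * ((1 + z) ^+ 2 * (p * (1 - p))) <= x * (1 + z) * (1 - p + p * z ^+ 2).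
  apply: (le_trans (y := 4 * (1 - z) * (1 - p + p * z ^+ 2))).
    apply: ler_wpM2l => //; lra.
  apply: ler_wpM2r => //.
have hz : 0 < 1 + z by lra.
rewrite -(ler_pM2r (_ : 0 < 4 * (1 + z))); last by lra.
nra.
Qed.

Lemma hoeff (p x : R) : 0 <= p <= 1 -> 0 <= x ->
  1 - p + p * expR (- x) <= expR (- x * p + x ^+ 2 / 8).
Proof.
move=> hp x0.
pose K := fun z : R => (1 - p + p * expR (- z)) * expR (p * z - 1/8 * (z * z)).
have : - K 0 <= - K x.
  apply: (@le_deriv (fun z => - K z)
    (fun z => expR (p * z - 1/8 * (z * z)) *
       (z / 4 * (1 - p + p * expR (- z)) - p * (1 - p) * (1 - expR (- z))))) => //.
    move=> z.
    have -> : (fun z => - K z) = (- ((cst (1 - p) + cst p * (expR \o -%R)) *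
       (expR \o (cst p * id - cst (1/8) * (id * id)))) : R -> R) by [].
    apply: is_derive_eq.
    have -> : (cst p * id - cst (1/8) * (id * id) : R -> R) z = p * z - 1/8 * (z * z) by [].
    have -> : (cst (1 - p) + cst p * (expR \o -%R) : R -> R) z = 1 - p + p * expR (- z) by [].
    rewrite !scaler0 !addr0 ?subr0 add0r /GRing.scale /= ?mulr1.
    rewrite [X in expR X * (p * _)](_ : _ = p * z - 1/8 * (z * z)) //.
    by field.
  move=> z z0 zx; apply: mulr_ge0; first exact: expR_ge0.
  rewrite subr_ge0; apply: hoeff_key => //; exact: ltW.
rewrite /K oppr0 expR0 !mulr0 subrr expR0 !mulr1 subrK lerN2 => h.
have e : expR (p * x - 1 / 8 * (x * x)) * expR (- x * p + x ^+ 2 / 8) = 1.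
  by rewrite -expRD -[RHS]expR0; congr expR; rewrite expr2; field.
have := ler_wpM2r (expR_ge0 (- x * p + x ^+ 2 / 8)) h.
by rewrite -(mulrA (1 - p + _)) e mulr1 mul1r.
Qed.
End Calc.
Section Mix.
Variable R : realType.

Lemma exp_convex (r u : R) : 0 <= r <= 1 -> expR (r * u) <= r * expR u + (1 - r).
Proof.
move=> /andP[r0 r1].
have e0 : 0 < expR (r * u) by exact: expR_gt0.
have h1 : expR (r * u) * (1 + (1 - r) * u) <= expR u.
  have := ler_wpM2l (ltW e0) (expR_ge1Dx ((1 - r) * u)); rewrite -expRD.
  by rewrite (_ : r * u + (1 - r) * u = u) //; ring.
have h2 : expR (r * u) * (1 - r * u) <= 1.
  have := ler_wpM2l (ltW e0) (expR_ge1Dx (- (r * u))); rewrite -expRD subrr expR0.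
  by rewrite (_ : 1 + - (r * u) = 1 - r * u) //.
have h3 : expR (r * u) = r * (expR (r * u) * (1 + (1 - r) * u)) +
    (1 - r) * (expR (r * u) * (1 - r * u)) by ring.
rewrite h3; apply: lerD.
  exact (ler_wpM2l r0 h1).
have h4 : 0 <= 1 - r by lra.
have h5 := ler_wpM2l h4 h2; rewrite mulr1 in h5; exact h5.
Qed.

Lemma pos_mix (I : finType) (W e : I -> R) :
  (forall i, 0 <= W i) -> \sum_i W i = 1 -> (forall i, 0 < e i) ->
  0 < \sum_i W i * e i.
Proof.
move=> W0 W1 e0; rewrite lt_def sumr_ge0 ?andbT; last first.
  by move=> i _; apply: mulr_ge0 => //; exact: ltW.
apply/negP => /eqP/psumr_eq0P h.
have : \sum_i W i = 0.
  apply: big1 => i _.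
  have := h (fun i _ => mulr_ge0 (W0 i) (ltW (e0 i))) i isT => /eqP.
  by rewrite mulf_eq0 (gt_eqF (e0 i)) orbF => /eqP.
by rewrite W1 => /eqP; rewrite oner_eq0.
Qed.

Lemma ln_le_of (x z : R) : 0 < x -> x <= expR z -> ln x <= z.
Proof.
move=> x0 h; rewrite -(expRK z) ler_ln //; rewrite posrE //; exact: expR_gt0.
Qed.

Lemma pmean (I : finType) (W L : I -> R) (a b : R) :
  (forall i, 0 <= W i) -> \sum_i W i = 1 -> 0 < a -> a <= b ->
  ln (\sum_i W i * expR (- a * L i)) / a <= ln (\sum_i W i * expR (- b * L i)) / b.
Proof.
move=> W0 W1 a0 ab.
have b0 : 0 < b by exact: lt_le_trans a0 ab.
set M := \sum_i W i * expR (- b * L i).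
have M0 : 0 < M by apply: pos_mix => // i; exact: expR_gt0.
set r := a / b.
have r01 : 0 <= r <= 1.
  apply/andP; split; first by rewrite divr_ge0 //; exact: ltW.
  by rewrite ler_pdivrMr // mul1r.
have key : \sum_i W i * expR (- a * L i) <= expR (r * ln M).
  have e i : expR (- a * L i) = expR (r * (- b * L i - ln M)) * expR (r * ln M).
    rewrite -expRD; congr expR; rewrite /r; by field; rewrite gt_eqF.
  under eq_bigr do rewrite e.
  have ee i : expR (- b * L i - ln M) = expR (- b * L i) / M.
    by rewrite expRD expRN lnK.
  apply: (le_trans (y := \sum_i W i * ((r * (expR (- b * L i) / M) + (1 - r)) * expR (r * ln M)))).
    apply: ler_sum => i _; apply: ler_wpM2l => //; apply: ler_wpM2r; first exact: expR_ge0.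
    by rewrite -ee; exact: exp_convex.
  under eq_bigr do rewrite mulrA.
  rewrite -mulr_suml.
  have -> : \sum_i W i * (r * (expR (- b * L i) / M) + (1 - r)) = 1.
    have -> : \sum_i W i * (r * (expR (- b * L i) / M) + (1 - r)) =
        \sum_i ((r / M) * (W i * expR (- b * L i)) + (1 - r) * W i).
      by apply: eq_bigr => i _; field; rewrite gt_eqF.
    rewrite big_split /= -!mulr_sumr W1 -/M.
    by field; rewrite gt_eqF.
  by rewrite mul1r.
have S0 : 0 < \sum_i W i * expR (- a * L i) by apply: pos_mix => // i; exact: expR_gt0.
have := ln_le_of S0 key.
rewrite ler_pdivrMr // => h; apply: le_trans h _.
by rewrite /r (_ : a / b * ln M = ln M / b * a) ?lexx //; ring.
Qed.

Lemma mix_hoeff (I : finType) (W X : I -> R) (eta : R) :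
  (forall i, 0 <= W i) -> \sum_i W i = 1 -> (forall i, 0 <= X i <= 1) -> 0 < eta ->
  ln (\sum_i W i * expR (- eta * X i)) <= - eta * \sum_i W i * X i + eta ^+ 2 / 8.
Proof.
move=> W0 W1 X01 e0.
set q := \sum_i W i * X i.
have q01 : 0 <= q <= 1.
  apply/andP; split; first by apply: sumr_ge0 => i _; apply: mulr_ge0 => //; have := X01 i; lra.
  rewrite -W1; apply: ler_sum => i _; rewrite -[leRHS]mulr1; apply: ler_wpM2l => //.
  by have := X01 i; lra.
have S0 : 0 < \sum_i W i * expR (- eta * X i) by apply: pos_mix => // i; exact: expR_gt0.
apply: ln_le_of => //.
apply: le_trans (hoeff q01 (ltW e0)).
apply: (le_trans (y := \sum_i W i * (X i * expR (- eta) + (1 - X i)))).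
  apply: ler_sum => i _; apply: ler_wpM2l => //.
  by rewrite mulrC exp_convex.
under eq_bigr do rewrite mulrDr mulrBr mulr1 mulrA.
rewrite big_split /= sumrB -mulr_suml W1 -/q; lra.
Qed.

Lemma telescope (a b : nat -> R) n : (1 <= n)%N ->
  (forall t, (1 <= t)%N -> (t < n)%N -> a t.+1 <= b t) ->
  \sum_(1 <= t < n.+1) (a t - b t) <= a 1%N - b n.
Proof.
elim: n => [//|n IH] _ h.
case: n IH h => [|n] IH h; first by rewrite big_nat1.
rewrite big_nat_recr //=.
have := IH isT (fun t t1 tn => h t t1 (ltnW tn)).
have := h n.+1 isT (ltnSn _).
lra.
Qed.
End Mix.

Lemma trunc_trunc j k s : (j <= k)%N -> trunc j (trunc k s) = trunc j s.
Proof.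
move=> jk; rewrite /trunc -filter_predI; apply: eq_filter => x /=.
by apply/andP/idP => [[]//|xj]; split => //; exact: leq_trans jk.
Qed.

Section Alg.
Variables (R : realType) (V : lmodType R) (Y : Type) (E : finType).
Variables (D : V -> Prop) (loss : V -> Y -> R) (A : algo V Y E).
Variables (w : nat -> seq nat -> R) (eta : nat -> R) (f : nat -> E -> V) (y : nat -> Y).

Lemma AT_loss_trunc s k : AT_loss loss A f y (trunc k s) k = AT_loss loss A f y s k.
Proof.
apply: eq_big_nat => j /andP[_ jk].
by rewrite /tau trunc_trunc.
Qed.

Lemma Lf_step s t : (1 <= t)%N ->
  AT_loss loss A f y s t = AT_loss loss A f y s t.-1 + loss (algo_pred A f y (tau t s) t) (y t).
Proof. by case: t => [//|t] _; rewrite /AT_loss big_nat_recr. Qed.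

Definition Zt t := \sum_(m : (t.-1).-tuple bool)
  w t (tpath_of m) * expR (- eta t * AT_loss loss A f y (tpath_of m) t.-1).
Definition Nt t := \sum_(m : (t.-1).-tuple bool)
  w t (tpath_of m) * expR (- eta t * AT_loss loss A f y (tpath_of m) t).

Hypothesis Hw : weights_ok w.
Hypothesis Heta : forall t, 0 < eta t.

Lemma w_ge0 t (m : (t.-1).-tuple bool) : 0 <= w t (tpath_of m).
Proof. by case: Hw => h _ _ _; have /andP[] := h _ _ (tpath_ok m). Qed.

Lemma w_sum1 t : \sum_(m : (t.-1).-tuple bool) w t (tpath_of m) = 1.
Proof. by case: Hw. Qed.

Lemma Zt_gt0 t : 0 < Zt t.
Proof. apply: pos_mix; [exact: w_ge0 | exact: w_sum1 | move=> m; exact: expR_gt0]. Qed.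

Lemma Nt_gt0 t : 0 < Nt t.
Proof. apply: pos_mix; [exact: w_ge0 | exact: w_sum1 | move=> m; exact: expR_gt0]. Qed.

Lemma Zt1 : Zt 1 = 1.
Proof.
rewrite /Zt -[RHS](w_sum1 1); apply: eq_bigr => m _.
by rewrite /AT_loss big_geq // mulr0 expR0 mulr1.
Qed.

Lemma link t : (1 <= t)%N -> eta t.+1 <= eta t ->
  ln (Zt t.+1) / eta t.+1 <= ln (Nt t) / eta t.
Proof.
move=> t1 et.
have -> : Zt t.+1 = \sum_(m : (t.-1).-tuple bool)
    w t (tpath_of m) * expR (- eta t.+1 * AT_loss loss A f y (tpath_of m) t).
  rewrite /Zt /= -(sum_group (fun s => expR (- eta t.+1 * AT_loss loss A f y s t)) t Hw).
  by apply: eq_bigr => m _; rewrite AT_loss_trunc.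
apply: pmean => //; [exact: w_ge0 | exact: w_sum1].
Qed.

Lemma final n shat : is_tpath n shat -> 0 < w n shat ->
  - (ln (Nt n) / eta n) <= AT_loss loss A f y shat n + (eta n)^-1 * ln (w n shat)^-1.
Proof.
move=> hs w0.
have [m0 e0] := tpath_surj hs.
have h : w n shat * expR (- eta n * AT_loss loss A f y shat n) <= Nt n.
  rewrite /Nt (bigD1 m0) //= e0 lerDl; apply: sumr_ge0 => m _.
  by apply: mulr_ge0; [exact: w_ge0 | exact: expR_ge0].
have p0 : 0 < w n shat * expR (- eta n * AT_loss loss A f y shat n).
  by apply: mulr_gt0 => //; exact: expR_gt0.
have := h; rewrite -ler_ln ?posrE //; last exact: Nt_gt0.
rewrite lnM ?posrE //; last exact: expR_gt0.
rewrite expRK lnV ?posrE // => hl.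
have e := Heta n.
have -> : AT_loss loss A f y shat n + (eta n)^-1 * - ln (w n shat) =
    (eta n * AT_loss loss A f y shat n - ln (w n shat)) / eta n.
  by field; rewrite gt_eqF.
rewrite -mulNr ler_pM2r ?invr_gt0 //.
move: hl; rewrite mulNr; lra.
Qed.

Lemma master n shat (e : nat -> R) : (1 <= n)%N ->
  (forall t, (1 <= t)%N -> (t < n)%N -> eta t.+1 <= eta t) ->
  is_tpath n shat -> 0 < w n shat ->
  (forall t, (1 <= t)%N -> (t <= n)%N ->
    loss (alg1_pred loss A f y w eta t) (y t) <= (ln (Zt t) - ln (Nt t)) / eta t + e t) ->
  alg1_loss loss A f y w eta n <=
    AT_loss loss A f y shat n + (eta n)^-1 * ln (w n shat)^-1 + \sum_(1 <= t < n.+1) e t.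
Proof.
move=> n1 hmono hs w0 hstep.
apply: (le_trans (y := \sum_(1 <= t < n.+1) ((ln (Zt t) / eta t - ln (Nt t) / eta t) + e t))).
  apply: ler_sum_nat => t /andP[t1 tn].
  by rewrite -mulrBl; apply: hstep.
rewrite big_split /= lerD2r.
have ht := @telescope R (fun t => ln (Zt t) / eta t) (fun t => ln (Nt t) / eta t) n n1
  (fun t t1 tn => link t1 (hmono t t1 tn)).
refine (le_trans ht _).
rewrite /= Zt1 ln1 mul0r add0r.
exact (final hs w0).
Qed.

Lemma alg1_weightE t s :
  alg1_weight loss A f y w eta t s = w t s * expR (- eta t * AT_loss loss A f y s t.-1).
Proof. by rewrite /alg1_weight AT_loss_trunc. Qed.

Definition alpha t (m : (t.-1).-tuple bool) :=
  w t (tpath_of m) * expR (- eta t * AT_loss loss A f y (tpath_of m) t.-1).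
Definition xpt t (m : (t.-1).-tuple bool) := algo_pred A f y (tau t (tpath_of m)) t.

Lemma pred_mix t : alg1_pred loss A f y w eta t =
  \sum_(m : (t.-1).-tuple bool) (alpha m / Zt t) *: xpt m.
Proof.
rewrite /alg1_pred.
have -> : \sum_(m : (t.-1).-tuple bool) alg1_weight loss A f y w eta t (tpath_of m) = Zt t.
  by apply: eq_bigr => m _; rewrite alg1_weightE.
rewrite scaler_sumr; apply: eq_bigr => m _.
by rewrite alg1_weightE scalerA mulrC.
Qed.

Lemma p_ge0 t (m : (t.-1).-tuple bool) : 0 <= alpha m / Zt t.
Proof.
apply: divr_ge0; last exact/ltW/Zt_gt0.
by apply: mulr_ge0; [exact: w_ge0 | exact: expR_ge0].
Qed.

Lemma p_sum1 t : \sum_(m : (t.-1).-tuple bool) alpha m / Zt t = 1.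
Proof. by rewrite -mulr_suml mulfV // gt_eqF // Zt_gt0. Qed.

Lemma p_exp t : (1 <= t)%N ->
  \sum_(m : (t.-1).-tuple bool) alpha m / Zt t * expR (- eta t * loss (xpt m) (y t)) =
  Nt t / Zt t.
Proof.
move=> t1; rewrite /Nt mulr_suml; apply: eq_bigr => m _.
rewrite /alpha (Lf_step _ t1) mulrDr expRD /xpt.
by rewrite mulrAC !mulrA.
Qed.

Hypothesis hD : forall k i, D (f k i).
Hypothesis hA : algo_in_D D A.
Hypothesis HDc : convex_dom D.

Lemma hist_D s t : List.Forall (fun p => forall i, D (p.1 i)) (hist f y s t).
Proof.
rewrite /hist; elim: (index_iota s t) => [|k l IH] /=; first exact: List.Forall_nil.
by apply: List.Forall_cons => // i; exact: hD.
Qed.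

Lemma xpt_D t (m : (t.-1).-tuple bool) : D (xpt m).
Proof. by apply: hA; [exact: hist_D | move=> i; exact: hD]. Qed.

Lemma step_a t : (1 <= t)%N -> convex_loss D loss -> (forall x yy, D x -> 0 <= loss x yy <= 1) ->
  loss (alg1_pred loss A f y w eta t) (y t) <= (ln (Zt t) - ln (Nt t)) / eta t + eta t / 8.
Proof.
move=> t1 hc h01.
have Hphi : forall x1 x2 (lam : R), D x1 -> D x2 -> 0 <= lam <= 1 ->
  lam * (- loss x1 (y t)) + (1 - lam) * (- loss x2 (y t)) <= - loss (lam *: x1 + (1 - lam) *: x2) (y t).
  by move=> x1 x2 lam h1 h2 hl; rewrite !mulrN -opprD lerN2; exact: hc.
have [_ hj] := jensen HDc Hphi (r := index_enum _) (@p_ge0 t) (@xpt_D t) (p_sum1 t).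
rewrite -pred_mix in hj.
have hq : loss (alg1_pred loss A f y w eta t) (y t) <=
    \sum_(m : (t.-1).-tuple bool) alpha m / Zt t * loss (xpt m) (y t).
  by move: hj; under eq_bigr do rewrite mulrN; rewrite sumrN lerN2.
have hh := mix_hoeff (@p_ge0 t) (p_sum1 t) (fun m => h01 _ (y t) (xpt_D m)) (Heta t).
rewrite p_exp // lnM ?posrE ?invr_gt0 ?Zt_gt0 ?Nt_gt0 // lnV ?posrE ?Zt_gt0 // in hh.
apply: (le_trans hq).
have e := Heta t.
set q := \sum_(m : (t.-1).-tuple bool) alpha m / Zt t * loss (xpt m) (y t) in hh *.
rewrite -(ler_pM2r e) mulrDl divfK ?gt_eqF //.
have -> : eta t / 8 * eta t = eta t ^+ 2 / 8 by rewrite expr2; ring.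
lra.
Qed.

Lemma step_b t : (1 <= t)%N -> exp_concave D loss (eta t) ->
  loss (alg1_pred loss A f y w eta t) (y t) <= (ln (Zt t) - ln (Nt t)) / eta t.
Proof.
move=> t1 hc.
have [_ hj] := jensen HDc (hc (y t)) (r := index_enum _) (@p_ge0 t) (@xpt_D t) (p_sum1 t).
rewrite -pred_mix p_exp // in hj.
have NZ : 0 < Nt t / Zt t by rewrite divr_gt0 ?Nt_gt0 ?Zt_gt0.
have := ln_le_of NZ hj.
rewrite lnM ?posrE ?invr_gt0 ?Zt_gt0 ?Nt_gt0 // lnV ?posrE ?Zt_gt0 // => hh.
have e := Heta t.
rewrite -(ler_pM2r e) divfK ?gt_eqF //.
move: hh; rewrite mulNr; lra.
Qed.
End Alg.

End Helpers.
Import Helpers.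
Unset Implicit Arguments.

Theorem lemma1 (R : realType) (V : lmodType R) (Y : Type) (E : finType)
  (D : V -> Prop) (loss : V -> Y -> R) (A : algo V Y E) (rho : R -> R)
  (w : nat -> seq nat -> R) (eta : nat -> R)
  (f : nat -> E -> V) (y : nat -> Y) (n : nat) (s shat : seq nat) :
  (1 <= n)%N ->
  convex_dom D -> convex_loss D loss ->
  (forall t i, D (f t i)) ->
  algo_in_D D A -> rho_ok rho -> regret_bound D loss A rho ->
  weights_ok w ->
  (forall t, 0 < eta t) ->
  (forall t, (1 <= t)%N -> (t < n)%N -> eta t.+1 <= eta t) ->
  is_tpath n s -> is_tpath n shat -> {subset s <= shat} -> 0 < w n shat ->
  ((forall x yy, D x -> 0 <= loss x yy <= 1) ->
    forall a : nat -> E,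
      alg1_loss loss A f y w eta n - meta_loss loss f y n s a
        <= rho_sum rho n shat + \sum_(1 <= t < n.+1) eta t / 8
           + (eta n)^-1 * ln (w n shat)^-1
      /\ rho_sum rho n shat + \sum_(1 <= t < n.+1) eta t / 8
           + (eta n)^-1 * ln (w n shat)^-1
        <= (size shat).+1%:R * rho (n%:R / (size shat).+1%:R)
           + \sum_(1 <= t < n.+1) eta t / 8 + (eta n)^-1 * ln (w n shat)^-1)
  /\
  (forall eta0 : R, 0 < eta0 -> exp_concave D loss eta0 ->
    (forall t, eta t = eta0) ->
    forall a : nat -> E,
      alg1_loss loss A f y w eta n - meta_loss loss f y n s a
        <= rho_sum rho n shat + eta0^-1 * ln (w n shat)^-1
      /\ rho_sum rho n shat + eta0^-1 * ln (w n shat)^-1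
        <= (size shat).+1%:R * rho (n%:R / (size shat).+1%:R)
           + eta0^-1 * ln (w n shat)^-1).
Proof.
move=> n1 HDc hc hD hA hrho hreg Hw Heta hmono hs hsh sub wpos.
have hrj := rho_jensen hrho n1 hsh.
split.
  move=> h01 a.
  have hdec := AT_decomp y a n1 hs hsh sub hreg hD.
  have hm := master Hw Heta (e := fun t => eta t / 8) n1 hmono hsh wpos
    (fun t t1 _ => step_a y Hw Heta hD hA HDc t1 hc h01).
  split; lra.
move=> eta0 e0 hexp heq a.
have hdec := AT_decomp y a n1 hs hsh sub hreg hD.
have hm := master Hw Heta (e := fun _ => 0) n1 hmono hsh wpos
  (fun t t1 _ => ltac:(rewrite addr0; apply: (step_b y Hw Heta hD hA HDc t1); rewrite heq; exact: hexp)).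
rewrite big1 ?addr0 // heq in hm.
split; lra.
Qed.
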